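(* Let $a,b$ be distinct real numbers, let $x_0\in\mathbb{R}$, and let $(\lambda_n)_{n\in\mathbb{N}}$ be a sequence with $\lambda_n\in\,]1,2[$ for all $n$, $\lambda_n\to 2$, and $\sum_{n}(2-\lambda_n)<+\infty$. Define the sequence $(x_n)_{n\in\mathbb{N}}$ of alternating relaxed projections onto $\{a\}$ and $\{b\}$ by \[ x_{2n+1}:=(1-\lambda_{2n})x_{2n}+\lambda_{2n}a,\qquad x_{2n+2}:=(1-\lambda_{2n+1})x_{2n+1}+\lambda_{2n+1}b . \] Then $x_{2n}\to \operatorname{sign}(b-a)\,\infty$ and $x_{2n+1}\to\operatorname{sign}(a-b)\,\infty$; in particular $|x_n|\to+\infty$. *)

(* Defs.v *)
From Stdlib Require Import Reals Lra.
Open Scope R_scope.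

Fixpoint arp (a b x0 : R) (lam : nat -> R) (n : nat) : R :=
  match n with
  | O => x0
  | S k => if Nat.even k
           then (1 - lam k) * arp a b x0 lam k + lam k * a
           else (1 - lam k) * arp a b x0 lam k + lam k * b
  end.

Definition cv_minus_infty (u : nat -> R) : Prop :=
  forall M : R, exists N : nat, forall n : nat, (n >= N)%nat -> u n < M.

(* Main.v *)
Require Import Defs.
From Stdlib Require Import Reals Lra Lia Arith.
Open Scope R_scope.
Lemma arp_S a b x0 lam k : arp a b x0 lam (S k) = if Nat.even k then (1 - lam k) * arp a b x0 lam k + lam k * a
           else (1 - lam k) * arp a b x0 lam k + lam k * b.
Proof. reflexivity. Qed.
Lemma arp_e a b x0 lam n : arp a b x0 lam (S (2*n)) = (1 - lam (2*n)%nat) * arp a b x0 lam (2*n) + lam (2*n)%nat * a.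
Proof. rewrite arp_S, Nat.even_mul. reflexivity. Qed.
Lemma arp_o a b x0 lam n : arp a b x0 lam (S (S (2*n))) = (1 - lam (S (2*n))) * arp a b x0 lam (S (2*n)) + lam (S (2*n)) * b.
Proof. rewrite arp_S, Nat.even_succ, Nat.odd_mul. reflexivity. Qed.
Fixpoint Qp (p : nat -> R) (n : nat) : R := match n with O => 1 | S k => p k * Qp p k end.

Lemma grow (u p : nat -> R) (d : R) : 0 < d -> (forall n, 0 < p n <= 1) ->
  (forall n, u (S n) >= p n * u n + d) ->
  (forall n, sum_f_R0 (fun k => 1 - p k) n <= 1/2) -> cv_infty u.
Proof.
  intros Hd Hp Hu Hs.
  assert (Q1 : forall n, 0 <= Qp p n <= 1).
  { induction n; simpl. lra. specialize (Hp n). nra. }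
  assert (Q2 : forall n, Qp p (S n) >= 1 - sum_f_R0 (fun k => 1 - p k) n).
  { induction n; simpl. lra. simpl in IHn. pose proof (Hp (S n)) as HpS.
    assert (0 <= sum_f_R0 (fun k => 1 - p k) n).
    { apply cond_pos_sum. intro k. pose proof (Hp k). lra. }
    nra. }
  assert (Q3 : forall n, Qp p n >= 1/2).
  { destruct n. simpl; lra. specialize (Q2 n); specialize (Hs n); lra. }
  assert (U : forall n, u n >= Qp p n * (u 0%nat + INR n * d)).
  { induction n. simpl. lra. specialize (Hu n). specialize (Hp n).
    specialize (Q1 (S n)). rewrite S_INR. simpl Qp in *.
    assert (p n * u n >= p n * (Qp p n * (u 0%nat + INR n * d))) by nra. nra. }
  intro M. destruct (INR_unbounded ((2 * Rabs M + Rabs (u 0%nat)) / d)) as [N HN].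
  exists N. intros n Hn. apply le_INR in Hn.
  assert (INR n * d > 2 * Rabs M + Rabs (u 0%nat)).
  { apply Rmult_gt_compat_r with (r := d) in HN; [|lra].
    unfold Rdiv in HN. rewrite Rmult_assoc, Rinv_l in HN; [|lra].
    assert (INR N * d <= INR n * d) by (apply Rmult_le_compat_r; lra). lra. }
  specialize (U n). specialize (Q3 n). specialize (Q1 n).
  pose proof (Rle_abs M). pose proof (Rle_abs (- u 0%nat)). rewrite Rabs_Ropp in H1. pose proof (Rabs_pos M).
  assert (Ht : u 0%nat + INR n * d > 2 * Rabs M) by lra.
  assert (Qp p n * (u 0%nat + INR n * d) >= 1/2 * (u 0%nat + INR n * d)) by (apply Rmult_ge_compat_r; lra).
  lra.
Qed.

Lemma sumS (e : nat -> R) k : sum_f_R0 e (S k) = sum_f_R0 e k + e (S k).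
Proof. reflexivity. Qed.

Lemma shift_sum (e : nat -> R) (M n : nat) :
  sum_f_R0 (fun k => e (2*(k+M)+2)%nat + e (2*(k+M)+3)%nat) n =
  sum_f_R0 e (2*(n+M)+3) - sum_f_R0 e (2*M+1).
Proof.
  induction n.
  - change (sum_f_R0 _ 0) with (e (2*(0+M)+2)%nat + e (2*(0+M)+3)%nat).
    replace (2*(0+M)+3)%nat with (S (S (2*M+1))) by lia. rewrite !sumS.
    replace (2*(0+M)+2)%nat with (S (2*M+1)) by lia.
    replace (2*(0+M)+3)%nat with (S (S (2*M+1))) by lia. ring.
  - rewrite sumS, IHn.
    replace (2*(S n+M)+3)%nat with (S (S (2*(n+M)+3))) by lia. rewrite !sumS.
    replace (2*(S n+M)+2)%nat with (S (2*(n+M)+3)) by lia.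
    replace (2*(S n+M)+3)%nat with (S (S (2*(n+M)+3))) by lia. ring.
Qed.

Lemma case_lt a b x0 lam : a < b -> (forall n, 1 < lam n < 2) ->
  (exists l : R, Un_cv (fun N => sum_f_R0 (fun n => 2 - lam n) N) l) ->
  cv_infty (fun n => arp a b x0 lam (2 * n)) /\
  cv_minus_infty (fun n => arp a b x0 lam (2 * n + 1)).
Proof.
  intros Hab Hl [l Hc].
  set (x := arp a b x0 lam).
  set (p := fun k => (lam (2*k)%nat - 1) * (lam (S (2*k)) - 1)).
  assert (Rec : forall k, x (2 * S k)%nat - a = p k * (x (2*k)%nat - a) + lam (S (2*k)) * (b - a)).
  { intro k. replace (2 * S k)%nat with (S (S (2*k))) by lia. unfold x.
    rewrite arp_o, arp_e. unfold p. ring. }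
  destruct (Hc (1/4)) as [N0 HN0]; [lra|].
  set (e := fun n => 2 - lam n).
  assert (Hev : cv_infty (fun n => x (2*n)%nat)).
  { assert (G : cv_infty (fun k => x (2*(k + S N0))%nat - a)).
    { apply (grow _ (fun k => p (k + S N0)%nat) (b - a)).
      - lra.
      - intro n. unfold p. pose proof (Hl (2*(n+S N0))%nat). pose proof (Hl (S (2*(n+S N0)))). split; nra.
      - intro n. cbv beta. replace (S n + S N0)%nat with (S (n + S N0)) by lia. rewrite Rec. pose proof (Hl (S (2*(n+S N0)))).
        assert (lam (S (2*(n+S N0))) * (b - a) >= b - a) by nra.
        lra.
      - intro n.
        apply Rle_trans with (sum_f_R0 (fun k => e (2*(k+N0)+2)%nat + e (2*(k+N0)+3)%nat) n).
        + apply sum_Rle. intros k _. unfold p, e.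
          replace (2*(k+N0)+2)%nat with (2*(k+S N0))%nat by lia.
          replace (2*(k+N0)+3)%nat with (S (2*(k+S N0))) by lia.
          pose proof (Hl (2*(k+S N0))%nat). pose proof (Hl (S (2*(k+S N0)))). nra.
        + rewrite shift_sum.
          assert (A1 := HN0 (2*(n+N0)+3)%nat ltac:(lia)).
          assert (A2 := HN0 (2*N0+1)%nat ltac:(lia)).
          unfold R_dist in A1, A2. unfold e.
          apply Rabs_def2 in A1. apply Rabs_def2 in A2. lra. }
    intro M. destruct (G (M - a)) as [N HN]. exists (N + S N0)%nat. intros n Hn.
    specialize (HN (n - S N0)%nat ltac:(lia)).
    replace (n - S N0 + S N0)%nat with n in HN by lia. lra. }
  split; [exact Hev|].
  intro M. destruct (Hev (Rmax (2*b - M) b)) as [N HN]. exists N. intros n Hn.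
  specialize (HN (S n) ltac:(lia)). cbv beta in HN |- *.
  pose proof (Rmax_l (2*b - M) b). pose proof (Rmax_r (2*b - M) b).
  assert (E : x (2 * S n)%nat - b = (1 - lam (S (2*n))) * (x (2*n+1)%nat - b)).
  { replace (2 * S n)%nat with (S (S (2*n))) by lia. replace (2*n+1)%nat with (S (2*n)) by lia.
    unfold x. rewrite arp_o. ring. }
  pose proof (Hl (S (2*n))).
  set (w := x (2*n+1)%nat - b) in *. set (v := x (2 * S n)%nat - b) in *.
  assert (v > b - M) by (unfold v; lra). assert (v >= 0) by (unfold v; lra).
  assert (w <= 0).
  { destruct (Rle_dec w 0); auto. assert ((1 - lam (S (2*n))) * w < 0) by (apply Rmult_neg_pos; lra). lra. }
  assert (v <= - w) by nra. unfold w in *. lra.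
Qed.

Lemma arp_neg a b x0 lam n : arp (-a) (-b) (-x0) lam n = - arp a b x0 lam n.
Proof.
  induction n. reflexivity. rewrite !arp_S, IHn. destruct (Nat.even n); ring.
Qed.

Theorem mainTheorem4 (a b x0 : R) (lam : nat -> R) :
  a <> b ->
  (forall n, 1 < lam n < 2) ->
  Un_cv lam 2 ->
  (exists l : R, Un_cv (fun N => sum_f_R0 (fun n => 2 - lam n) N) l) ->
  ((a < b ->
      cv_infty (fun n => arp a b x0 lam (2 * n)) /\
      cv_minus_infty (fun n => arp a b x0 lam (2 * n + 1))) /\
   (b < a ->
      cv_minus_infty (fun n => arp a b x0 lam (2 * n)) /\
      cv_infty (fun n => arp a b x0 lam (2 * n + 1)))) /\
  cv_infty (fun n => Rabs (arp a b x0 lam n)).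
Proof.
  intros Hne Hl _ Hs.
  assert (C1 : a < b -> cv_infty (fun n => arp a b x0 lam (2 * n)) /\
      cv_minus_infty (fun n => arp a b x0 lam (2 * n + 1))).
  { intro H. apply case_lt; auto. }
  assert (C2 : b < a -> cv_minus_infty (fun n => arp a b x0 lam (2 * n)) /\
      cv_infty (fun n => arp a b x0 lam (2 * n + 1))).
  { intro H. destruct (case_lt (-a) (-b) (-x0) lam ltac:(lra) Hl Hs) as [A B].
    split.
    - intro M. destruct (A (-M)) as [N HN]. exists N. intros n Hn.
      specialize (HN n Hn). rewrite arp_neg in HN. lra.
    - intro M. destruct (B (-M)) as [N HN]. exists N. intros n Hn.
      specialize (HN n Hn). rewrite arp_neg in HN. lra. }
  split; [split; assumption|].
  assert (K : cv_infty (fun n => Rabs (arp a b x0 lam (2*n))) /\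
              cv_infty (fun n => Rabs (arp a b x0 lam (2*n+1)))).
  { destruct (Rtotal_order a b) as [H|[H|H]]; [| contradiction |].
    - destruct (C1 H) as [A B]. split.
      + intro M. destruct (A M) as [N HN]. exists N. intros n Hn.
        specialize (HN n Hn). pose proof (Rle_abs (arp a b x0 lam (2*n))). lra.
      + intro M. destruct (B (-M)) as [N HN]. exists N. intros n Hn.
        specialize (HN n Hn). pose proof (Rle_abs (- arp a b x0 lam (2*n+1))).
        rewrite Rabs_Ropp in H0. lra.
    - destruct (C2 H) as [A B]. split.
      + intro M. destruct (A (-M)) as [N HN]. exists N. intros n Hn.
        specialize (HN n Hn). pose proof (Rle_abs (- arp a b x0 lam (2*n))).
        rewrite Rabs_Ropp in H0. lra.
      + intro M. destruct (B M) as [N HN]. exists N. intros n Hn.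
        specialize (HN n Hn). pose proof (Rle_abs (arp a b x0 lam (2*n+1))). lra. }
  destruct K as [A B]. intro M.
  destruct (A M) as [N1 H1]. destruct (B M) as [N2 H2].
  exists (2 * (N1 + N2) + 2)%nat. intros n Hn.
  destruct (Nat.Even_or_Odd n) as [[m Hm]|[m Hm]]; subst n.
  - apply H1. lia.
  - apply H2. lia.
Qed.
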